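(* Let $\Sigma=\{a,b\}$ and consider regular expressions over $\Sigma$ generated by $\beta := \varepsilon \mid a \mid b \mid (\beta+\beta) \mid (\beta\cdot\beta) \mid (\beta^\star)$. Let $\mathcal G_2$ be the grammar with start symbol $\alpha$ and productions \begin{align*} \alpha &:= \varepsilon \mid a \mid b \mid (\alpha\cdot\alpha) \mid (\alpha^\star) \mid (\alpha_P+\alpha_P),\\ \alpha_P &:= \varepsilon \mid a \mid b \mid (\alpha\cdot\alpha) \mid (\alpha_\Sigma^\star) \mid (\alpha_P+\alpha_P),\\ \alpha_\Sigma &:= \varepsilon \mid a \mid b \mid (\alpha\cdot\alpha) \mid (\alpha^\star) \mid \gamma,\\ \gamma &:= (\alpha_{ab}+\alpha_{ab}) \mid (\alpha_{ab}+a) \mid (\alpha_{ab}+b) \mid (a+\alpha_{ab}) \mid (b+\alpha_{ab}) \mid (a+a) \mid (b+b),\\ \alpha_{ab} &:= \varepsilon \mid (\alpha\cdot\alpha) \mid (\alpha_\Sigma^\star) \mid (\alpha_P+\alpha_P). \end{align*} Then a regular expression $\beta$ over $\{a,b\}$ is generated by $\mathcal G_2$ (from the start symbol $\alpha$) if and only if the pattern $(a+b)^\star$ or $(b+a)^\star$ does not occur in a union in $\beta$, i.e., $\beta$ has no subexpression of the form $(\beta_1+\beta_2)$ with $\beta_1$ or $\beta_2$ equal (syntactically) to $((a+b)^\star)$ or $((b+a)^\star)$.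
   Context: Regular expressions are treated as syntactic trees (fully parenthesized expressions); equality of expressions here means syntactic identity. *)

(* Defs.v *)
Inductive re : Type :=
| Eps : re
| ChA : re
| ChB : re
| Plus : re -> re -> re
| Cat : re -> re -> re
| Star : re -> re.

(** The grammar G_2: one inductive predicate per nonterminal.
    gen_alpha = alpha, gen_P = alpha_P, gen_S = alpha_Sigma,
    gen_gamma = gamma, gen_ab = alpha_ab. *)
Inductive gen_alpha : re -> Prop :=
| ga_eps : gen_alpha Eps
| ga_a : gen_alpha ChA
| ga_b : gen_alpha ChB
| ga_cat : forall r s, gen_alpha r -> gen_alpha s -> gen_alpha (Cat r s)
| ga_star : forall r, gen_alpha r -> gen_alpha (Star r)
| ga_plus : forall r s, gen_P r -> gen_P s -> gen_alpha (Plus r s)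
with gen_P : re -> Prop :=
| gP_eps : gen_P Eps
| gP_a : gen_P ChA
| gP_b : gen_P ChB
| gP_cat : forall r s, gen_alpha r -> gen_alpha s -> gen_P (Cat r s)
| gP_star : forall r, gen_S r -> gen_P (Star r)
| gP_plus : forall r s, gen_P r -> gen_P s -> gen_P (Plus r s)
with gen_S : re -> Prop :=
| gS_eps : gen_S Eps
| gS_a : gen_S ChA
| gS_b : gen_S ChB
| gS_cat : forall r s, gen_alpha r -> gen_alpha s -> gen_S (Cat r s)
| gS_star : forall r, gen_alpha r -> gen_S (Star r)
| gS_gamma : forall r, gen_gamma r -> gen_S r
with gen_gamma : re -> Prop :=
| gg_abab : forall r s, gen_ab r -> gen_ab s -> gen_gamma (Plus r s)
| gg_aba : forall r, gen_ab r -> gen_gamma (Plus r ChA)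
| gg_abb : forall r, gen_ab r -> gen_gamma (Plus r ChB)
| gg_aab : forall r, gen_ab r -> gen_gamma (Plus ChA r)
| gg_bab : forall r, gen_ab r -> gen_gamma (Plus ChB r)
| gg_aa : gen_gamma (Plus ChA ChA)
| gg_bb : gen_gamma (Plus ChB ChB)
with gen_ab : re -> Prop :=
| gab_eps : gen_ab Eps
| gab_cat : forall r s, gen_alpha r -> gen_alpha s -> gen_ab (Cat r s)
| gab_star : forall r, gen_S r -> gen_ab (Star r)
| gab_plus : forall r s, gen_P r -> gen_P s -> gen_ab (Plus r s).

Inductive subexpr (s : re) : re -> Prop :=
| sub_refl : subexpr s s
| sub_plusl : forall r1 r2, subexpr s r1 -> subexpr s (Plus r1 r2)
| sub_plusr : forall r1 r2, subexpr s r2 -> subexpr s (Plus r1 r2)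
| sub_catl : forall r1 r2, subexpr s r1 -> subexpr s (Cat r1 r2)
| sub_catr : forall r1 r2, subexpr s r2 -> subexpr s (Cat r1 r2)
| sub_star : forall r1, subexpr s r1 -> subexpr s (Star r1).

Definition forbidden (r : re) : Prop :=
  r = Star (Plus ChA ChB) \/ r = Star (Plus ChB ChA).

Definition occurs_in_union (beta : re) : Prop :=
  exists b1 b2, subexpr (Plus b1 b2) beta /\ (forbidden b1 \/ forbidden b2).

(* Main.v *)
Require Import Defs.
From Stdlib Require Import Setoid.

Definition isF (r : re) : bool :=
  match r with
  | Star (Plus ChA ChB) | Star (Plus ChB ChA) => true
  | _ => false end.

Definition isAB (r : re) : bool :=
  match r with
  | Plus ChA ChB | Plus ChB ChA => true
  | _ => false end.

Definition isPl (r : re) : Prop := match r with Plus _ _ => True | _ => False end.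
Definition isCh (r : re) : bool := match r with ChA | ChB => true | _ => false end.

Fixpoint good (r : re) : Prop :=
  match r with
  | Plus x y => good x /\ good y /\ isF x = false /\ isF y = false
  | Cat x y => good x /\ good y
  | Star x => good x
  | _ => True
  end.

Lemma forbidden_isF b : forbidden b <-> isF b = true.
Proof.
  unfold forbidden; split.
  - intros [-> | ->]; reflexivity.
  - destruct b as [| | | | |b]; try discriminate; simpl.
    destruct b as [| | |x y| |]; try discriminate.
    destruct x; try discriminate; destruct y; try discriminate; auto.
Qed.

Lemma good_no_occ r : good r -> ~ occurs_in_union r.
Proof.
  intros G [b1 [b2 [S F]]].
  remember (Plus b1 b2) as p eqn:E.
  induction S; simpl in G; subst.
  - destruct G as [_ [_ [H1 H2]]].
    destruct F as [F|F]; apply forbidden_isF in F; congruence.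
  - apply IHS; tauto.
  - apply IHS; tauto.
  - apply IHS; tauto.
  - apply IHS; tauto.
  - apply IHS; tauto.
Qed.

Lemma sub_trans a b c : subexpr a b -> subexpr b c -> subexpr a c.
Proof.
  intros H1 H2; induction H2; [auto|apply sub_plusl|apply sub_plusr|apply sub_catl|apply sub_catr|apply sub_star]; auto.
Qed.

Lemma occ_lift r s : occurs_in_union r -> subexpr r s -> occurs_in_union s.
Proof.
  intros [b1 [b2 [S F]]] H; exists b1, b2; split; auto.
  eapply sub_trans; eauto.
Qed.

Lemma good_or_occ r : good r \/ occurs_in_union r.
Proof.
  induction r.
  - left; exact I.
  - left; exact I.
  - left; exact I.
  - destruct IHr1 as [G1|O1]; [|right; eapply occ_lift; [exact O1|apply sub_plusl, sub_refl]].
    destruct IHr2 as [G2|O2]; [|right; eapply occ_lift; [exact O2|apply sub_plusr, sub_refl]].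
    destruct (isF r1) eqn:E1.
    + right; exists r1, r2; split; [constructor|left; apply forbidden_isF; auto].
    + destruct (isF r2) eqn:E2.
      * right; exists r1, r2; split; [constructor|right; apply forbidden_isF; auto].
      * left; simpl; auto.
  - destruct IHr1 as [G1|O1]; [|right; eapply occ_lift; [exact O1|apply sub_catl, sub_refl]].
    destruct IHr2 as [G2|O2]; [|right; eapply occ_lift; [exact O2|apply sub_catr, sub_refl]].
    left; simpl; auto.
  - destruct IHr as [G|O]; [left; exact G|right; eapply occ_lift; [exact O|apply sub_star, sub_refl]].
Qed.

Lemma good_iff r : good r <-> ~ occurs_in_union r.
Proof.
  split; [apply good_no_occ|].
  intros H; destruct (good_or_occ r); tauto.
Qed.

Lemma isF_star r : isF (Star r) = isAB r.
Proof. destruct r; try reflexivity; destruct r1; try reflexivity; destruct r2; reflexivity. Qed.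

Lemma isCh_AB r1 r2 : isCh r1 = false -> isAB (Plus r1 r2) = false.
Proof. destruct r1; try discriminate; reflexivity. Qed.

Lemma isCh_AB2 r1 r2 : isCh r2 = false -> isAB (Plus r1 r2) = false.
Proof. destruct r1; try reflexivity; destruct r2; try discriminate; reflexivity. Qed.

Lemma all_iff r :
  (gen_alpha r <-> good r) /\
  (gen_P r <-> good r /\ isF r = false) /\
  (gen_S r <-> good r /\ isAB r = false) /\
  (gen_gamma r <-> isPl r /\ good r /\ isAB r = false) /\
  (gen_ab r <-> good r /\ isF r = false /\ isCh r = false).
Proof.
  induction r.
  1-3: repeat split; intros; simpl in *;
    try solve [constructor; auto | tauto | discriminate | intuition discriminate
              | match goal with H : _ |- _ => inversion H; subst; simpl in *; try tauto;
                  try discriminate; match goal with H : gen_gamma _ |- _ => inversion H end end].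
  all: try (destruct IHr1 as (A1&P1&S1&G1&B1); destruct IHr2 as (A2&P2&S2&G2&B2)).
  all: try (destruct IHr as (A1&P1&S1&G1&B1)).
  -
    assert (G : gen_gamma (Plus r1 r2) <-> isPl (Plus r1 r2) /\ good (Plus r1 r2) /\ isAB (Plus r1 r2) = false).
    { split.
      - intro H; inversion H; subst.
        + apply B1 in H2 as (?&?&?); apply B2 in H3 as (?&?&?).
          repeat split; auto; apply isCh_AB; auto.
        + apply B1 in H1 as (?&?&?); repeat split; auto; apply isCh_AB; auto.
        + apply B1 in H1 as (?&?&?); repeat split; auto; apply isCh_AB; auto.
        + apply B2 in H1 as (?&?&?); repeat split; auto; apply isCh_AB2; auto.
        + apply B2 in H1 as (?&?&?); repeat split; auto; apply isCh_AB2; auto.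
        + repeat split.
        + repeat split.
      - intros (_&(g1&g2&f1&f2)&ab).
        destruct (isCh r1) eqn:C1; destruct (isCh r2) eqn:C2.
        + destruct r1; try discriminate; destruct r2; try discriminate; try solve [constructor].
          all: discriminate.
        + destruct r1; try discriminate; constructor; apply B2; auto.
        + destruct r2; try discriminate; constructor; apply B1; auto.
        + constructor; [apply B1|apply B2]; auto. }
    refine (conj (conj _ _) (conj (conj _ _) (conj (conj _ _) (conj (conj _ _) (conj _ _))))); intro H; simpl in *.
    + inversion H; subst. apply P1 in H2 as (?&?); apply P2 in H3 as (?&?); auto.
    + destruct H as (?&?&?&?); constructor; [apply P1|apply P2]; auto.
    + inversion H; subst. apply P1 in H2 as (?&?); apply P2 in H3 as (?&?); auto.
    + destruct H as ((?&?&?&?)&_); constructor; [apply P1|apply P2]; auto.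
    + inversion H; subst. apply G in H0; exact (proj2 H0).
    + apply gS_gamma, G; split; [exact I|exact H].
    + apply G in H; exact H.
    + apply G; exact H.
    + inversion H; subst. apply P1 in H2 as (?&?); apply P2 in H3 as (?&?); auto.
    + destruct H as ((?&?&?&?)&_); constructor; [apply P1|apply P2]; auto.
  -
    refine (conj (conj _ _) (conj (conj _ _) (conj (conj _ _) (conj (conj _ _) (conj _ _))))); intro H.
    all: try (inversion H; subst;
           try match goal with H : gen_gamma _ |- _ => inversion H end;
           apply A1 in H2; apply A2 in H3; simpl; tauto).
    all: simpl in H.
    + apply ga_cat; [apply A1|apply A2]; apply H.
    + apply gP_cat; [apply A1|apply A2]; apply H.
    + apply gS_cat; [apply A1|apply A2]; apply H.
    + destruct H as [[] _].
    + apply gab_cat; [apply A1|apply A2]; apply H.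
  -
    refine (conj (conj _ _) (conj (conj _ _) (conj (conj _ _) (conj (conj _ _) (conj _ _))))); intro H.
    all: rewrite ?isF_star in *.
    all: try (inversion H; subst;
           try match goal with H : gen_gamma _ |- _ => inversion H end;
           try apply A1 in H1; try apply S1 in H1; simpl; tauto).
    + apply ga_star, A1; exact H.
    + apply gP_star, S1; exact H.
    + apply gS_star, A1; exact (proj1 H).
    + destruct H as [[] _].
    + apply gab_star, S1; tauto.
Qed.


Theorem lemma1 : forall beta : re, gen_alpha beta <-> ~ occurs_in_union beta.
Proof.
  intro b; rewrite <- good_iff; apply all_iff.
Qed.
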